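(* For every integer $n\ge 1$, $(n-1) P_{n-1} P_{n}^2=2 P_{n+1} P_{n}^2+(n-1) P_{2 n} P_{n}+(n+1) P_{n+1} (P_{n+1}^2-P_{2 n+1})$, where $P_k$ denotes the $k$-th Pell number.
   Context: The Pell numbers are defined by $P_0=0$, $P_1=1$, $P_k=2P_{k-1}+P_{k-2}$ for $k\ge 2$. *)

(* Defs.v *)
From mathcomp Require Import all_boot all_algebra.
Set Implicit Arguments. Unset Strict Implicit. Unset Printing Implicit Defensive.

Fixpoint pell (k : nat) : nat :=
  match k with
  | 0 => 0
  | 1 => 1
  | (k'.+1 as k1).+1 => 2 * pell k1 + pell k'
  end.

(* Main.v *)
Require Import Defs.
From mathcomp Require Import all_boot all_algebra.
From mathcomp Require Import zify ring.
Import GRing.Theory.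
Local Open Scope ring_scope.

Lemma pellSS k : pell k.+2 = (2 * pell k.+1 + pell k)%N.
Proof. by []. Qed.

Lemma pell_add m n : pell (m + n).+1 = (pell m.+1 * pell n.+1 + pell m * pell n)%N.
Proof.
have H : forall m, pell (m + n).+1 = (pell m.+1 * pell n.+1 + pell m * pell n)%N
   /\ pell (m.+1 + n).+1 = (pell m.+2 * pell n.+1 + pell m.+1 * pell n)%N.
  elim=> [|k [IH1 IH2]].
    split; first by rewrite /= mul1n mul0n addn0.
    rewrite add1n pellSS /=; lia.
  split; first exact IH2.
  rewrite !addSn in IH2 *; rewrite pellSS IH2 IH1 !pellSS; lia.
by case: (H m).
Qed.

Theorem proposition7p5 (n : nat) : (1 <= n)%N ->
  ((n%:Z - 1) * (pell n.-1)%:Z * (pell n)%:Z ^+ 2 =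
   2 * (pell n.+1)%:Z * (pell n)%:Z ^+ 2
   + (n%:Z - 1) * (pell (2 * n))%:Z * (pell n)%:Z
   + (n%:Z + 1) * (pell n.+1)%:Z * ((pell n.+1)%:Z ^+ 2 - (pell (2 * n).+1)%:Z))%R.
Proof.
case: n => [//|k] _.
have E1 : pell (2 * k.+1) = (pell k.+2 * pell k.+1 + pell k.+1 * pell k)%N.
  by rewrite -pell_add; congr pell; lia.
have E2 : pell (2 * k.+1).+1 = (pell k.+2 * pell k.+2 + pell k.+1 * pell k.+1)%N.
  by rewrite -pell_add; congr pell; lia.
rewrite E1 E2 /=.
move: (pell k) (pell k.+1) => a b.
rewrite !PoszD !PoszM -!natz.
ring.
Qed.
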